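(* Let $P,P'\in\mathcal D$ and $e,e'\in\mathcal E$. If $P\sqsubseteq P'$ then $\mathrm{da}(P,e)\le\mathrm{da}(P',e)$, and if $e\sqsubseteq e'$ then $\mathrm{da}(P,e)\le\mathrm{da}(P,e')$.
   Context: Let $\mathcal V$ be a countably infinite set of variables. $\mathcal M$ is the set of maps $m:\mathcal V\to\mathbb N\cup\{\infty\}$, ordered pointwise. $\mathcal P$ is the set of discrete probability distributions on $\mathcal M$. For a subdistribution $\pi$ on $\mathcal M$ with total mass $|\pi|$, its weighting is $\overline\pi(x)=\frac1{|\pi|}\sum_m\pi(m)m(x)$ if $|\pi|>0$, and $\overline\pi(x)=0$ otherwise. For $p_1,p_2\in\mathcal P$: $p_1\sqsubseteq p_2$ iff there is a coupling $\omega$ of $p_1,p_2$ with $\overline{\omega(\cdot,m)}\le m$ pointwise for all $m\in\mathcal M$, where $\omega(\cdot,m)$ is the subdistribution $m'\mapsto\omega(m',m)$. For $P\subseteq\mathcal P$, $\downarrow P=\{p\mid p\sqsubseteq p'\text{ for some }p'\in P\}$. $\mathcal D=\{P\subseteq\mathcal P\mid P\ne\emptyset,\ \downarrow P=P\}$, ordered by $P_1\sqsubseteq P_2$ iff every $p_1\in P_1$ has some $p_2\in P_2$ with $p_1\sqsubseteq p_2$. $\mathcal E$ is the set of maps $e:\mathcal V\to[0,1)$, ordered pointwise. $\mathrm{dda}(m,e)=1-\prod_{x\in\mathcal V}(1-e(x))^{m(x)}$ (with $c^\infty=0$ for $0\le c<1$ and $1^\infty=1$), $\mathrm{pda}(p,e)=\sum_{m\in\mathcal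 M}p(m)\,\mathrm{dda}(m,e)$, and $\mathrm{da}(P,e)=\sup_{p\in P}\mathrm{pda}(p,e)$. *)

(* Defs.v *)
From Stdlib Require Import Reals List ClassicalEpsilon.
Open Scope R_scope.

Definition Var := nat.

Inductive natinf : Type := NFin (n : nat) | NInf.

Definition Mem := Var -> natinf.

(* Supremum of a set of reals (meaningful when nonempty and bounded above). *)
Definition Rsup (E : R -> Prop) : R := epsilon (inhabits 0) (fun s => is_lub E s).

Fixpoint fsum {A : Type} (f : A -> R) (l : list A) : R :=
  match l with nil => 0 | a :: l' => f a + fsum f l' end.

Definition fin_sums {A : Type} (f : A -> R) : R -> Prop :=
  fun s => exists l, NoDup l /\ s = fsum f l.

Definition has_sum {A : Type} (f : A -> R) (s : R) : Prop :=
  (forall a, 0 <= f a) /\ is_lub (fin_sums f) s.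

Definition tsum {A : Type} (f : A -> R) : R := Rsup (fin_sums f).

(* Discrete probability distribution (countable support follows from summability). *)
Definition is_dist {A : Type} (p : A -> R) : Prop := has_sum p 1.

Inductive ER : Type := EFin (r : R) | EInf.

Definition esum {A : Type} (g : A -> ER) : ER :=
  if excluded_middle_informative (exists a, g a = EInf) then EInf
  else
    let h := fun a => match g a with EFin r => r | EInf => 0 end in
    if excluded_middle_informative (bound (fin_sums h)) then EFin (tsum h) else EInf.

(* the term pi(m) * m(x), with the convention 0 * ∞ = 0 *)
Definition wterm (pi : Mem -> R) (x : Var) (m : Mem) : ER :=
  match m x with
  | NFin k => EFin (pi m * INR k)
  | NInf => if Req_EM_T (pi m) 0 then EFin 0 else EInf
  end.

Definition weighting (pi : Mem -> R) (x : Var) : ER :=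
  if Rlt_dec 0 (tsum pi) then
    match esum (wterm pi x) with
    | EFin r => EFin (r / tsum pi)
    | EInf => EInf
    end
  else EFin 0.

Definition ER_le_natinf (w : ER) (n : natinf) : Prop :=
  match n with
  | NInf => True
  | NFin k => match w with EFin r => r <= INR k | EInf => False end
  end.

Definition coupling (w : Mem * Mem -> R) (p1 p2 : Mem -> R) : Prop :=
  is_dist w /\
  (forall m1, has_sum (fun m2 => w (m1, m2)) (p1 m1)) /\
  (forall m2, has_sum (fun m1 => w (m1, m2)) (p2 m2)).

Definition dist_le (p1 p2 : Mem -> R) : Prop :=
  is_dist p1 /\ is_dist p2 /\
  exists w, coupling w p1 p2 /\
    forall (m : Mem) (x : Var), ER_le_natinf (weighting (fun m' => w (m', m)) x) (m x).

Definition down (P : (Mem -> R) -> Prop) : (Mem -> R) -> Prop :=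
  fun p => exists p', P p' /\ dist_le p p'.

Definition in_D (P : (Mem -> R) -> Prop) : Prop :=
  (exists p, P p) /\ (forall p, down P p <-> P p).

Definition D_le (P1 P2 : (Mem -> R) -> Prop) : Prop :=
  forall p1, P1 p1 -> exists p2, P2 p2 /\ dist_le p1 p2.

Definition in_E (e : Var -> R) : Prop := forall x, 0 <= e x < 1.
Definition E_le (e e' : Var -> R) : Prop := forall x, e x <= e' x.

(* factor (1 - e(x))^(m(x)), with c^∞ = 0 for c < 1 and 1^∞ = 1 *)
Definition factor (m : Mem) (e : Var -> R) (x : Var) : R :=
  match m x with
  | NFin k => (1 - e x) ^ k
  | NInf => if Req_EM_T (e x) 0 then 1 else 0
  end.

Fixpoint pprod (f : nat -> R) (n : nat) : R :=
  match n with O => 1 | S n' => pprod f n' * f n' end.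

Definition infprod (f : nat -> R) : R :=
  epsilon (inhabits 0) (fun l => Un_cv (pprod f) l).

Definition dda (m : Mem) (e : Var -> R) : R := 1 - infprod (factor m e).
Definition pda (p : Mem -> R) (e : Var -> R) : R := tsum (fun m => p m * dda m e).
Definition da (P : (Mem -> R) -> Prop) (e : Var -> R) : R :=
  Rsup (fun r => exists p, P p /\ r = pda p e).

(* Main.v *)
Require Import Defs.
From Stdlib Require Import Reals List ClassicalEpsilon Classical Lra Lia.
Open Scope R_scope.

Lemma fsum_app {A} (f : A -> R) l1 l2 : fsum f (l1 ++ l2) = fsum f l1 + fsum f l2.
Proof. induction l1; simpl; [lra|rewrite IHl1; lra]. Qed.

Lemma fsum_ext {A} (f g : A -> R) l : (forall a, In a l -> f a = g a) -> fsum f l = fsum g l.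
Proof. induction l; simpl; intros H; [lra|]. rewrite H by auto. rewrite IHl by auto. lra. Qed.

Lemma fsum_le {A} (f g : A -> R) l : (forall a, In a l -> f a <= g a) -> fsum f l <= fsum g l.
Proof. induction l; simpl; intros H; [lra|].
 assert (fsum f l <= fsum g l) by (apply IHl; auto). specialize (H a (or_introl eq_refl)). lra. Qed.

Lemma fsum_nonneg {A} (f : A -> R) l : (forall a, In a l -> 0 <= f a) -> 0 <= fsum f l.
Proof. intros H. replace 0 with (fsum (fun _ : A => 0) l). apply fsum_le; auto.
 clear H; induction l; simpl; auto; lra. Qed.

Lemma fsum_scal {A} (f : A -> R) c l : fsum (fun a => c * f a) l = c * fsum f l.
Proof. induction l; simpl; [lra|rewrite IHl; lra]. Qed.

Lemma fsum_plus {A} (f g : A -> R) l : fsum (fun a => f a + g a) l = fsum f l + fsum g l.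
Proof. induction l; simpl; [lra|rewrite IHl; lra]. Qed.

Lemma fsum_minus {A} (f g : A -> R) l : fsum (fun a => f a - g a) l = fsum f l - fsum g l.
Proof. induction l; simpl; [lra|rewrite IHl; lra]. Qed.

Lemma fsum_zero {A} l : fsum (fun _ : A => 0) l = 0.
Proof. induction l; simpl; auto; lra. Qed.

Lemma fsum_swap {A B} (h : A -> B -> R) l1 l2 :
  fsum (fun a => fsum (fun b => h a b) l2) l1 = fsum (fun b => fsum (fun a => h a b) l1) l2.
Proof. induction l1; simpl.
 - rewrite fsum_zero; auto.
 - rewrite IHl1. rewrite <- fsum_plus. auto. Qed.

Definition deq {A : Type} : forall x y : A, {x = y} + {x <> y} :=
  fun x y => excluded_middle_informative (x = y).

Lemma fsum_remove {A} (f : A -> R) l a : (forall b, 0 <= f b) -> In a l ->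
  f a + fsum f (remove deq a l) <= fsum f l.
Proof. intros Hf; induction l; simpl; [tauto|]. intros [->|H].
 - destruct (deq a a); [|congruence].
   assert (fsum f (remove deq a l) <= fsum f l). { clear -Hf. induction l; simpl; [lra|].
     destruct (deq _ _); simpl; pose proof (Hf a0); lra. }
   lra.
 - destruct (deq a a0).
   + subst. specialize (IHl H). specialize (Hf a0). lra.
   + simpl. specialize (IHl H). lra. Qed.

Lemma fsum_incl {A} (f : A -> R) l l' : (forall b, 0 <= f b) -> NoDup l -> incl l l' ->
  fsum f l <= fsum f l'.
Proof. intros Hf Hl; revert l'; induction Hl as [|a l Ha Hl IH]; simpl; intros l' Hi.
 - apply fsum_nonneg; auto.
 - assert (Hin : In a l') by (apply Hi; left; auto).
   pose proof (fsum_remove f l' a Hf Hin).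
   assert (fsum f l <= fsum f (remove deq a l')).
   { apply IH. intros b Hb. apply in_in_remove. intro; subst; tauto. apply Hi; right; auto. }
   lra. Qed.

Lemma lub_approx (E : R -> Prop) s eps : is_lub E s -> 0 < eps -> exists x, E x /\ s - eps < x.
Proof. intros [H1 H2] He. apply NNPP; intro Hn.
 assert (is_upper_bound E (s - eps)).
 { intros x Hx. destruct (Rle_dec x (s - eps)); auto. exfalso; apply Hn; exists x; split; auto; lra. }
 specialize (H2 _ H). lra. Qed.

Lemma Rsup_lub E : bound E -> (exists x, E x) -> is_lub E (Rsup E).
Proof. intros Hb Hn. unfold Rsup. apply epsilon_spec.
 destruct (completeness E Hb Hn) as [m Hm]. eauto. Qed.

Lemma fin_sums_nonempty {A} (f : A -> R) : exists x, fin_sums f x.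
Proof. exists 0, nil; split; [constructor|auto]. Qed.

Lemma tsum_lub {A} (f : A -> R) : bound (fin_sums f) -> is_lub (fin_sums f) (tsum f).
Proof. intros; apply Rsup_lub; auto; apply fin_sums_nonempty. Qed.

Lemma has_sum_tsum {A} (f : A -> R) s : has_sum f s -> tsum f = s.
Proof. intros [_ H]. apply (is_lub_u (fin_sums f)); auto. apply tsum_lub. exists s; apply H. Qed.

Lemma has_sum_le {A} (f : A -> R) s l : has_sum f s -> NoDup l -> fsum f l <= s.
Proof. intros [_ [H _]] Hl. apply H. exists l; auto. Qed.

Lemma has_sum_ge0 {A} (f : A -> R) s : has_sum f s -> 0 <= s.
Proof. intros H. apply (has_sum_le f s nil H). constructor. Qed.

Lemma has_sum_single {A} (f : A -> R) s a : has_sum f s -> f a <= s.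
Proof. intros H. pose proof (has_sum_le f s (a::nil) H). simpl in H0.
 assert (f a + 0 <= s) by (apply H0; repeat constructor; auto). lra. Qed.

Lemma tsum_le_bound {A} (f : A -> R) B : (forall l, NoDup l -> fsum f l <= B) -> tsum f <= B.
Proof. intros H. assert (Hb : bound (fin_sums f)). { exists B. intros x [l [Hl ->]]; auto. }
 destruct (tsum_lub f Hb) as [_ H2]. apply H2. intros x [l [Hl ->]]; auto. Qed.

Lemma tsum_ge {A} (f : A -> R) l B : (forall l, NoDup l -> fsum f l <= B) -> NoDup l -> fsum f l <= tsum f.
Proof. intros H Hl. assert (Hb : bound (fin_sums f)). { exists B. intros x [l' [Hl' ->]]; auto. }
 destruct (tsum_lub f Hb) as [H1 _]. apply H1. exists l; auto. Qed.

Lemma factor_bounds m e x : in_E e -> 0 <= factor m e x <= 1.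
Proof. intros He. specialize (He x). unfold factor. destruct (m x).
 - split. apply pow_le; lra. apply Rle_trans with (1^n); [apply pow_incr; lra | rewrite pow1; lra].
 - destruct (Req_EM_T (e x) 0); lra. Qed.

Lemma pprod_bounds f n : (forall x, 0 <= f x <= 1) -> 0 <= pprod f n <= 1.
Proof. intros H; induction n; simpl; [lra|]. specialize (H n). nra. Qed.

Lemma pprod_decr f n k : (forall x, 0 <= f x <= 1) -> (n <= k)%nat -> pprod f k <= pprod f n.
Proof. intros H Hk; induction Hk; [lra|]. simpl. pose proof (pprod_bounds f m H).
 specialize (H m). nra. Qed.

Lemma cv_ge (u : nat -> R) l a : (forall n, a <= u n) -> Un_cv u l -> a <= l.
Proof. intros H Hc. destruct (Rle_dec a l); auto. exfalso.
 destruct (Hc (a - l)) as [N HN]; [lra|]. specialize (HN N (le_n N)). specialize (H N).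
 unfold Rdist in HN. apply Rabs_def2 in HN. lra. Qed.

Lemma cv_le_ev (u : nat -> R) l a n0 : (forall n, (n0 <= n)%nat -> u n <= a) -> Un_cv u l -> l <= a.
Proof. intros H Hc. destruct (Rle_dec l a); auto. exfalso.
 destruct (Hc (l - a)) as [N HN]; [lra|]. specialize (HN (max N n0) ltac:(lia)). specialize (H (max N n0) ltac:(lia)).
 unfold Rdist in HN. apply Rabs_def2 in HN. lra. Qed.

Lemma infprod_cv f : (forall x, 0 <= f x <= 1) -> Un_cv (pprod f) (infprod f).
Proof. intros H. unfold infprod. apply epsilon_spec.
 destruct (decreasing_cv (pprod f)) as [l Hl].
 - intros n. apply pprod_decr; auto.
 - exists 0. intros x [n ->]. unfold opp_seq. pose proof (pprod_bounds f n H). lra.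
 - eauto. Qed.

Lemma infprod_bounds f n : (forall x, 0 <= f x <= 1) -> 0 <= infprod f <= pprod f n.
Proof. intros H. pose proof (infprod_cv f H). split.
 - apply (cv_ge (pprod f)); auto. intros k; pose proof (pprod_bounds f k H); lra.
 - apply (cv_le_ev (pprod f) _ _ n); auto. intros; apply pprod_decr; auto. Qed.

Definition F (m : Mem) (e : Var -> R) := infprod (factor m e).

Lemma F_bounds m e n : in_E e -> 0 <= F m e <= pprod (factor m e) n.
Proof. intros He; apply infprod_bounds; intros; apply factor_bounds; auto. Qed.

Lemma F_le1 m e : in_E e -> 0 <= F m e <= 1.
Proof. intros He. pose proof (F_bounds m e 0 He). simpl in H. lra. Qed.

Lemma dda_bounds m e : in_E e -> 0 <= dda m e <= 1.
Proof. intros He. pose proof (F_le1 m e He). unfold dda; fold (F m e). lra. Qed.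

Lemma F_cv m e : in_E e -> Un_cv (fun n => pprod (factor m e) n) (F m e).
Proof. intros He. apply infprod_cv. intros; apply factor_bounds; auto. Qed.

Lemma dda_mono_e m e e' : in_E e -> in_E e' -> E_le e e' -> dda m e <= dda m e'.
Proof. intros He He' Hle. unfold dda. fold (F m e) (F m e').
 assert (F m e' <= F m e); [|lra].
 apply (Rle_cv_lim (Un:=pprod (factor m e')) (Vn:=pprod (factor m e))); [|apply F_cv; auto|apply F_cv; auto].
 intros n. induction n; simpl; [lra|].
 pose proof (factor_bounds m e n He). pose proof (factor_bounds m e' n He').
 pose proof (pprod_bounds (factor m e') n (fun x => factor_bounds m e' x He')).
 assert (factor m e' n <= factor m e n).
 { unfold factor. specialize (He n); specialize (He' n); specialize (Hle n). destruct (m n).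
   - apply pow_incr; lra.
   - destruct (Req_EM_T (e' n) 0); destruct (Req_EM_T (e n) 0); lra. }
 apply Rmult_le_compat; lra. Qed.

Definition g (m : Mem) (x : Var) : R := match m x with NFin k => INR k | NInf => 0 end.
Definition c (e : Var -> R) (x : Var) : R := - ln (1 - e x).

Lemma g_ge0 m x : 0 <= g m x.
Proof. unfold g; destruct (m x); [apply pos_INR|lra]. Qed.

Lemma c_ge0 e x : in_E e -> 0 <= c e x.
Proof. intros He; specialize (He x); unfold c.
 assert (ln (1 - e x) <= 0); [|lra].
 destruct (Req_dec (e x) 0). rewrite H, Rminus_0_r, ln_1; lra.
 left. rewrite <- ln_1. apply ln_increasing; lra. Qed.

Lemma c_zero e x : e x = 0 -> c e x = 0.
Proof. intros H; unfold c; rewrite H, Rminus_0_r, ln_1; lra. Qed.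

Lemma factor_exp m e x : in_E e -> (0 < e x -> m x <> NInf) ->
  factor m e x = exp (- (c e x * g m x)).
Proof. intros He H. pose proof (He x) as Hx. unfold factor, g, c. destruct (m x) eqn:E.
 - rewrite <- Rpower_pow by lra. unfold Rpower. f_equal. ring.
 - destruct (Req_EM_T (e x) 0).
   + rewrite e0, Rminus_0_r, ln_1. replace (- (- 0 * 0)) with 0 by ring. rewrite exp_0; auto.
   + exfalso. apply H; auto. lra. Qed.

Lemma pprod_exp m e N : in_E e -> (forall x, (x < N)%nat -> 0 < e x -> m x <> NInf) ->
  pprod (factor m e) N = exp (- fsum (fun x => c e x * g m x) (seq 0 N)).
Proof. intros He; induction N; intros H.
 - simpl. rewrite Ropp_0, exp_0; auto.
 - rewrite seq_S, fsum_app.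
   change (pprod (factor m e) (S N)) with (pprod (factor m e) N * factor m e N). simpl fsum. rewrite IHN by (intros x0 Hx0; apply H; lia).
   rewrite factor_exp by (auto; apply H; lia).
   rewrite <- exp_plus. f_equal. ring. Qed.

Lemma pprod_zero f N x : (x < N)%nat -> f x = 0 -> pprod f N = 0.
Proof. intros Hx Hf. induction N; [lia|]. simpl. destruct (Nat.eq_dec x N).
 - subst. rewrite Hf; ring.
 - rewrite IHN by lia; ring. Qed.

Section Jensen.
Variables (q : Mem -> R) (t : R) (m2 : Mem) (e : Var -> R).
Hypothesis Hq : has_sum q t.
Hypothesis Hw : forall x, ER_le_natinf (weighting q x) (m2 x).
Hypothesis He : in_E e.

Lemma q_ge0 m : 0 <= q m.
Proof. destruct Hq as [H _]; auto. Qed.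

Lemma W1 m1 x : 0 < q m1 -> m1 x = NInf -> m2 x = NInf.
Proof. intros Hp Hi. pose proof (has_sum_single q t m1 Hq).
 pose proof (Hw x) as H'. unfold weighting in H'. rewrite (has_sum_tsum q t Hq) in H'.
 destruct (Rlt_dec 0 t); [|lra]. unfold esum in H'.
 destruct (excluded_middle_informative _) as [Hex|Hn].
 - destruct (m2 x); simpl in H'; tauto.
 - exfalso. apply Hn. exists m1. unfold wterm. rewrite Hi.
   destruct (Req_EM_T (q m1) 0); [lra|auto]. Qed.

Lemma W2 x k L : m2 x = NFin k -> NoDup L -> fsum (fun m1 => q m1 * g m1 x) L <= t * INR k.
Proof. intros Hk HL. pose proof (has_sum_ge0 q t Hq) as Ht.
 destruct (Rlt_dec 0 t) as [Htp|Htn].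
 - pose proof (Hw x) as H'. unfold weighting in H'. rewrite (has_sum_tsum q t Hq) in H'.
   destruct (Rlt_dec 0 t); [|lra]. rewrite Hk in H'. unfold esum in H'.
   destruct (excluded_middle_informative _) as [Hex|Hn]; [simpl in H'; tauto|].
   destruct (excluded_middle_informative _) as [Hb|Hnb]; [|simpl in H'; tauto].
   simpl in H'.
   set (h := fun a => match wterm q x a with EFin r0 => r0 | EInf => 0 end) in *.
   assert (Hh : forall a, h a = q a * g a x).
   { intros a. unfold h, wterm, g. destruct (a x) eqn:E; auto.
     destruct (Req_EM_T (q a) 0) as [e0|n0]. rewrite e0; ring.
     exfalso; apply Hn; exists a; unfold wterm; rewrite E.
     destruct (Req_EM_T (q a) 0); [contradiction|auto]. }
   rewrite <- (fsum_ext h) by auto.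
   destruct (tsum_lub h Hb) as [Hub _].
   assert (fsum h L <= tsum h) by (apply Hub; exists L; auto).
   apply Rle_trans with (tsum h); auto.
   apply (Rmult_le_compat_r t) in H'; [|lra].
   replace (tsum h / t * t) with (tsum h) in H' by (field; lra). lra.
 - assert (t = 0) by lra.
   rewrite (fsum_ext _ (fun _ => 0)). rewrite fsum_zero; nra.
   intros a _. pose proof (has_sum_single q t a Hq). pose proof (q_ge0 a).
   replace (q a) with 0 by lra. ring.
Qed.

Lemma JensenN N L : NoDup L -> t * pprod (factor m2 e) N <=
  (t - fsum q L) + fsum (fun m1 => q m1 * pprod (factor m1 e) N) L.
Proof. intros HL.
 assert (HtL : fsum q L <= t) by (apply has_sum_le; auto).
 assert (HtL0 : 0 <= fsum q L) by (apply fsum_nonneg; intros; apply q_ge0).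
 assert (Hnn : 0 <= fsum (fun m1 => q m1 * pprod (factor m1 e) N) L).
 { apply fsum_nonneg; intros a _. pose proof (q_ge0 a).
   pose proof (pprod_bounds (factor a e) N (fun x => factor_bounds a e x He)). nra. }
 destruct (classic (forall x, (x < N)%nat -> 0 < e x -> m2 x <> NInf)) as [Hg|Hb].
 - rewrite (pprod_exp m2 e N He Hg).
   set (s0 := fsum (fun x => c e x * g m2 x) (seq 0 N)).
   set (A := fun m1 => fsum (fun x => c e x * g m1 x) (seq 0 N)).
   set (E := exp (- s0)).
   assert (HE : 0 < E) by apply exp_pos.
   assert (HE1 : E * (1 + s0) <= 1).
   { pose proof (exp_ineq1_le s0). unfold E.
     assert (exp (-s0) * exp s0 = 1) by (rewrite <- exp_plus; replace (-s0+s0) with 0 by ring; apply exp_0).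
     assert (exp (-s0) * (1 + s0) <= exp (-s0) * exp s0) by (apply Rmult_le_compat_l; fold E; lra).
     lra. }
   assert (Hterm : forall m1, In m1 L -> E * (q m1 * (1 + s0) - q m1 * A m1) <= q m1 * pprod (factor m1 e) N).
   { intros m1 _. pose proof (q_ge0 m1). destruct (Req_dec (q m1) 0) as [Z|NZ].
     - rewrite Z. pose proof (pprod_bounds (factor m1 e) N (fun x => factor_bounds m1 e x He)). nra.
     - assert (Hp : 0 < q m1) by lra.
       assert (Hg1 : forall x, (x < N)%nat -> 0 < e x -> m1 x <> NInf).
       { intros x Hx Hex Hi. apply (Hg x Hx Hex). apply (W1 m1 x Hp Hi). }
       rewrite (pprod_exp m1 e N He Hg1). fold (A m1).
       assert (exp (- A m1) = E * exp (s0 - A m1)).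
       { unfold E. rewrite <- exp_plus. f_equal. ring. }
       rewrite H0. pose proof (exp_ineq1_le (s0 - A m1)).
       assert (E * (1 + s0 - A m1) <= E * exp (s0 - A m1)) by (apply Rmult_le_compat_l; lra).
       nra. }
   assert (Hsum : fsum (fun m1 => E * (q m1 * (1 + s0) - q m1 * A m1)) L <=
                  fsum (fun m1 => q m1 * pprod (factor m1 e) N) L) by (apply fsum_le; auto).
   rewrite fsum_scal, fsum_minus in Hsum.
   rewrite (fsum_ext (fun m1 => q m1 * (1 + s0)) (fun m1 => (1 + s0) * q m1)) in Hsum
     by (intros; ring).
   rewrite fsum_scal in Hsum.
   assert (HX : fsum (fun m1 => q m1 * A m1) L <= t * s0).
   { unfold A. rewrite (fsum_ext _ (fun m1 => fsum (fun x => q m1 * (c e x * g m1 x)) (seq 0 N)))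
       by (intros; rewrite fsum_scal; auto).
     rewrite fsum_swap. unfold s0. rewrite <- fsum_scal.
     apply fsum_le. intros x Hx. apply in_seq in Hx.
     rewrite (fsum_ext _ (fun a => c e x * (q a * g a x))) by (intros; ring).
     rewrite fsum_scal. pose proof (c_ge0 e x He).
     destruct (Rle_lt_or_eq_dec 0 (e x) (proj1 (He x))) as [Hpos|Hz].
     - destruct (m2 x) eqn:Em.
       + pose proof (W2 x n L Em HL). unfold g at 2; rewrite Em.
         replace (t * (c e x * INR n)) with (c e x * (t * INR n)) by ring.
         apply Rmult_le_compat_l; auto.
       + exfalso. apply (Hg x ltac:(lia) Hpos Em).
     - rewrite c_zero by auto. lra. }
   nra.
 - apply not_all_ex_not in Hb. destruct Hb as [x Hx].
   assert ((x < N)%nat /\ 0 < e x /\ m2 x = NInf) as [H1 [H2 H3]].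
   { destruct (classic ((x < N)%nat)); [|exfalso; apply Hx; intros; tauto].
     destruct (classic (0 < e x)); [|exfalso; apply Hx; intros; tauto].
     destruct (m2 x) eqn:Em; [|auto]. exfalso; apply Hx; intros; congruence. }
   rewrite (pprod_zero _ N x H1). lra.
   unfold factor. rewrite H3. destruct (Req_EM_T (e x) 0); [lra|auto].
Qed.

Lemma fsum_cv (u : Mem -> nat -> R) (l : Mem -> R) L :
  (forall m, Un_cv (u m) (l m)) ->
  Un_cv (fun N => fsum (fun m1 => q m1 * u m1 N) L) (fsum (fun m1 => q m1 * l m1) L).
Proof. intros H. induction L; simpl.
 - intros eps Heps. exists 0%nat. intros. unfold Rdist. rewrite Rminus_0_r, Rabs_R0; auto.
 - apply CV_plus; auto. apply CV_mult; auto.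
   intros eps Heps. exists 0%nat. intros. unfold Rdist. rewrite Rminus_diag, Rabs_R0; auto.
Qed.

Lemma Jensen L : NoDup L -> fsum (fun m1 => q m1 * dda m1 e) L <= t * dda m2 e.
Proof. intros HL. unfold dda. fold (F m2 e).
 rewrite (fsum_ext _ (fun m1 => q m1 - q m1 * F m1 e)) by (intros; unfold F; ring).
 rewrite fsum_minus.
 assert (t * F m2 e <= (t - fsum q L) + fsum (fun m1 => q m1 * F m1 e) L); [|lra].
 apply (cv_ge (fun N => (t - fsum q L) + fsum (fun m1 => q m1 * pprod (factor m1 e) N) L)).
 - intros N. eapply Rle_trans; [|apply JensenN; auto].
   pose proof (F_bounds m2 e N He). pose proof (has_sum_ge0 q t Hq).
   apply Rmult_le_compat_l; lra.
 - apply CV_plus.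
   + intros eps Heps. exists 0%nat. intros. unfold Rdist. rewrite Rminus_diag, Rabs_R0; auto.
   + apply fsum_cv. intros m. apply F_cv; auto.
Qed.
End Jensen.

Lemma pd_fin p e L : is_dist p -> in_E e -> NoDup L -> fsum (fun m => p m * dda m e) L <= 1.
Proof. intros Hp He HL. apply Rle_trans with (fsum p L).
 - apply fsum_le; intros a _. pose proof (dda_bounds a e He). destruct Hp as [Hp _].
   specialize (Hp a). nra.
 - apply has_sum_le; auto. Qed.

Lemma pda_ge p e L : is_dist p -> in_E e -> NoDup L -> fsum (fun m => p m * dda m e) L <= pda p e.
Proof. intros Hp He HL. unfold pda. apply (tsum_ge _ _ 1); auto.
 intros; apply pd_fin; auto. Qed.

Lemma pda_le1 p e : is_dist p -> in_E e -> pda p e <= 1.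
Proof. intros. apply tsum_le_bound. intros; apply pd_fin; auto. Qed.

Definition Approx (f : Mem -> R) (a : R) :=
  forall eps, 0 < eps -> exists L, NoDup L /\ a - eps <= fsum f L.

Lemma approx_plus f g a b : (forall x, 0 <= f x) -> (forall x, 0 <= g x) ->
  Approx f a -> Approx g b -> Approx (fun x => f x + g x) (a + b).
Proof. intros Hf Hg Ha Hb eps Heps.
 destruct (Ha (eps/2)) as [Lf [Hf1 Hf2]]; [lra|].
 destruct (Hb (eps/2)) as [Lg [Hg1 Hg2]]; [lra|].
 exists (nodup deq (Lf ++ Lg)). split; [apply NoDup_nodup|].
 rewrite fsum_plus.
 assert (fsum f Lf <= fsum f (nodup deq (Lf ++ Lg))).
 { apply fsum_incl; auto. intros x Hx. apply nodup_In. apply in_or_app; auto. }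
 assert (fsum g Lg <= fsum g (nodup deq (Lf ++ Lg))).
 { apply fsum_incl; auto. intros x Hx. apply nodup_In. apply in_or_app; auto. }
 lra. Qed.

Lemma approx_le f a B : (forall L, NoDup L -> fsum f L <= B) -> Approx f a -> a <= B.
Proof. intros H Ha. destruct (Rle_dec a B); auto. exfalso.
 destruct (Ha ((a - B)/2)) as [L [HL HL2]]; [lra|]. specialize (H L HL). lra. Qed.

Lemma pda_mono p p2 e : in_E e -> dist_le p p2 -> pda p e <= pda p2 e.
Proof. intros He [Hp [Hp2 [w [[Hw [H1 H2]] Hwt]]]].
 assert (Hw0 : forall a, 0 <= w a) by (destruct Hw; auto).
 unfold pda at 1. apply tsum_le_bound. intros L1 HL1.
 set (G := fun m2 => fsum (fun m1 => w (m1, m2) * dda m1 e) L1).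
 assert (HA : Approx G (fsum (fun m => p m * dda m e) L1)).
 { unfold G. clear HL1. induction L1 as [|a L1 IH]; simpl.
   - intros eps Heps. exists nil; split; [constructor|simpl; lra].
   - apply (approx_plus (fun m2 => w (a, m2) * dda a e)); auto.
     + intros x; pose proof (dda_bounds a e He); specialize (Hw0 (a, x)); nra.
     + intros x; apply fsum_nonneg; intros b _; pose proof (dda_bounds b e He); specialize (Hw0 (b, x)); nra.
     + intros eps Heps. destruct (lub_approx _ _ eps (proj2 (H1 a)) Heps) as [s [[L [HL ->]] Hs]].
       exists L; split; auto.
       rewrite (fsum_ext _ (fun m2 => dda a e * w (a, m2))) by (intros; ring).
       rewrite fsum_scal. pose proof (dda_bounds a e He). nra. }
 apply (approx_le G _ _); auto.
 intros L2 HL2. apply Rle_trans with (fsum (fun m => p2 m * dda m e) L2).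
 - apply fsum_le. intros m2 _. unfold G.
   apply (Jensen (fun m1 => w (m1, m2)) (p2 m2) m2 e); auto.
 - apply pda_ge; auto. Qed.

Lemma in_D_dist P p : in_D P -> P p -> is_dist p.
Proof. intros [_ H] Hp. apply H in Hp. destruct Hp as [p' [_ [Hd _]]]; auto. Qed.

Lemma pda_mono_e p e e' : is_dist p -> in_E e -> in_E e' -> E_le e e' -> pda p e <= pda p e'.
Proof. intros Hp He He' Hle. unfold pda at 1. apply tsum_le_bound. intros L HL.
 apply Rle_trans with (fsum (fun m => p m * dda m e') L).
 - apply fsum_le; intros a _. pose proof (dda_mono_e a e e' He He' Hle).
   destruct Hp as [Hp _]; specialize (Hp a). nra.
 - apply pda_ge; auto. Qed.

Lemma da_lub P e : in_D P -> in_E e -> is_lub (fun r => exists p, P p /\ r = pda p e) (da P e).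
Proof. intros HP He. apply Rsup_lub.
 - exists 1. intros r [p [Hp ->]]. apply pda_le1; auto. eapply in_D_dist; eauto.
 - destruct HP as [[p Hp] _]. eauto. Qed.

Theorem proposition5 (P P' : (Mem -> R) -> Prop) (e e' : Var -> R) :
  in_D P -> in_D P' -> in_E e -> in_E e' ->
  (D_le P P' -> da P e <= da P' e) /\ (E_le e e' -> da P e <= da P e').
Proof. intros HP HP' He He'. split.
 - intros Hle. destruct (da_lub P e HP He) as [_ Hl]. apply Hl.
   intros r [p [Hp ->]]. destruct (Hle p Hp) as [p2 [Hp2 Hd]].
   apply Rle_trans with (pda p2 e). apply pda_mono; auto.
   destruct (da_lub P' e HP' He) as [Hu _]. apply Hu. eauto.
 - intros Hle. destruct (da_lub P e HP He) as [_ Hl]. apply Hl.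
   intros r [p [Hp ->]]. apply Rle_trans with (pda p e').
   apply pda_mono_e; auto. apply (in_D_dist P); auto.
   destruct (da_lub P e' HP He') as [Hu _]. apply Hu. eauto.
Qed.
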